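(* A Schröder permutation $\pi\in\mathcal{S}_n$ avoids $231$ if and only if (i) every diagram row of $\pi$ contains exactly one element of $\mathcal{E}(\pi)$, and (ii) every diagram column of $\pi$ contains at most one element of $\mathcal{E}(\pi)$.
   Context: A permutation avoids $\tau\in\mathcal{S}_k$ if no subsequence of length $k$ is in the same relative order as $\tau$. A Schröder permutation is one avoiding both $1243$ and $2143$. Represent $\pi\in\mathcal{S}_n$ by an $n\times n$ array, rows $i$ numbered top to bottom, columns $j$ left to right, with a dot in square $(i,\pi_i)$. The diagram $D(\pi)$ is the set of squares $(i,j)$ with $\pi_i>j$ and $\pi^{-1}(j)>i$. A diagram row (resp. diagram column) is a row (resp. column) of the array containing at least one square of $D(\pi)$. The essential set $\mathcal{E}(\pi)$ is the set of $(i,j)\in D(\pi)$ with $(i+1,j)\notin D(\pi)$ and $(i,j+1)\notin D(\pi)$ (squares outside the array count as not in $D(\pi)$). *)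

(* Defs.v *)
From mathcomp Require Import all_boot all_fingroup.
Set Implicit Arguments. Unset Strict Implicit. Unset Printing Implicit Defensive.

(* Permutations of size n are elements of 'S_n = {perm 'I_n}; rows/columns
   are indexed 0..n-1 (top-to-bottom / left-to-right); the dot of row i is in
   column pi i. *)

(* Pattern containment: tau is given in one-line notation as a seq nat
   (e.g. [:: 2; 3; 1] for 231).  pi contains tau iff there are positions
   f 0 < f 1 < ... < f (k-1) whose values are in the same relative order. *)
Definition contains_pattern n (pi : 'S_n) (tau : seq nat) : Prop :=
  exists f : 'I_(size tau) -> 'I_n,
    (forall a b : 'I_(size tau), a < b -> f a < f b) /\
    (forall a b : 'I_(size tau),
        (pi (f a) < pi (f b)) = (nth 0 tau a < nth 0 tau b)).

Definition avoids n (pi : 'S_n) (tau : seq nat) : Prop := ~ contains_pattern pi tau.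

Definition schroeder n (pi : 'S_n) : Prop :=
  avoids pi [:: 1; 2; 4; 3] /\ avoids pi [:: 2; 1; 4; 3].

(* (i, j) in the diagram D(pi): pi_i > j and pi^{-1}(j) > i.  Indices outside
   the array are never in the diagram. *)
Definition in_diagram n (pi : 'S_n) (i j : nat) : bool :=
  [exists x : 'I_n, exists y : 'I_n,
     [&& (x == i :> nat), (y == j :> nat), y < pi x & x < (pi^-1)%g y]].

Definition in_essential n (pi : 'S_n) (i j : nat) : bool :=
  [&& in_diagram pi i j, ~~ in_diagram pi i.+1 j & ~~ in_diagram pi i j.+1].

Definition diagram_row n (pi : 'S_n) (i : 'I_n) : bool :=
  [exists j : 'I_n, in_diagram pi i j].

Definition diagram_col n (pi : 'S_n) (j : 'I_n) : bool :=
  [exists i : 'I_n, in_diagram pi i j].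

(* Main.v *)
Require Import Defs.
From mathcomp Require Import all_boot all_fingroup.
From mathcomp Require Import zify.
Set Implicit Arguments. Unset Strict Implicit.

Lemma cross (P : nat -> bool) x y : x <= y -> P x -> ~~ P y ->
  exists j, [/\ x <= j, j < y, P j & ~~ P j.+1].
Proof.
elim: y => [|y IH] hxy hx hy.
  by move: hxy; rewrite leqn0 => /eqP E; subst x; rewrite hx in hy.
have hxy' : x <= y.
  case: (ltnP y x) => // h; have E : x = y.+1 by lia.
  by subst x; rewrite hx in hy.
case hPy: (P y).
  by exists y; split.
have [j [h1 h2 h3 h4]] := IH hxy' hx (negbT hPy).
by exists j; split => //; lia.
Qed.

Section S.
Variable m : nat.
Local Notation n := m.+1.
Variable pi : 'S_n.

Definition f i := nat_of_ord (pi (inord i)).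
Definition g j := nat_of_ord ((pi^-1)%g (inord j)).

Lemma f_lt i : f i < n. Proof. exact: ltn_ord. Qed.
Lemma g_lt j : g j < n. Proof. exact: ltn_ord. Qed.
Lemma gf i : i < n -> g (f i) = i.
Proof. by move=> h; rewrite /g /f inord_val permK inordK. Qed.
Lemma fg j : j < n -> f (g j) = j.
Proof. by move=> h; rewrite /g /f inord_val permKV inordK. Qed.
Lemma f_inj i1 i2 : i1 < n -> i2 < n -> f i1 = f i2 -> i1 = i2.
Proof. by move=> h1 h2 E; rewrite -(gf h1) -(gf h2) E. Qed.

Lemma diagE i j : in_diagram pi i j = [&& i < n, j < n, j < f i & i < g j].
Proof.
rewrite /in_diagram; apply/existsP/idP.
  case=> x /existsP [y /and4P [/eqP xi /eqP yj lt1 lt2]]; subst.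
  by rewrite /f /g !inord_val !ltn_ord lt1 lt2.
case/and4P=> hi hj h1 h2; exists (inord i); apply/existsP; exists (inord j).
rewrite !inordK // !eqxx /=; exact/andP.
Qed.

Definition ess i j := [/\ i.+1 < n, f i.+1 <= j, j < f i, i < g j & g j.+1 <= i].

Lemma essE i j : in_essential pi i j <-> ess i j.
Proof.
rewrite /in_essential !diagE; split.
  case/and3P=> /and4P [hi hj h1 h2] h3 h4.
  have hin : i.+1 < n by have := g_lt j; lia.
  have hf : f i.+1 <= j.
    case: (ltnP j (f i.+1)) => // hlt.
    have E : g j = i.+1.
      move: h3; rewrite hin hj hlt /=; lia.
    have := fg hj; rewrite E; lia.
  have hj1 : j.+1 < n by have := f_lt i; lia.
  split => //.
  case: (ltnP j.+1 (f i)) => hh.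
    move: h4; rewrite hi hj1 hh /=; lia.
  have E : f i = j.+1 by lia.
  by rewrite -E gf.
case=> hin hf h1 h2 h3.
have hj : j < n by have := f_lt i; lia.
rewrite hj h1 h2 /= (_ : i < n) ?andbT; last by lia.
rewrite /=; apply/andP; split; apply/negP; case/and3P => *; lia.
Qed.


Definition T231 := exists a b c, [/\ a < b, b < c, c < n, f c < f a & f a < f b].

Lemma pat231 : contains_pattern pi [:: 2; 3; 1] <-> T231.
Proof.
split.
  case=> F [hinc hval].
  pose o0 := @Ordinal 3 0 isT; pose o1 := @Ordinal 3 1 isT; pose o2 := @Ordinal 3 2 isT.
  exists (F o0), (F o1), (F o2); rewrite /f !inord_val; split => //.
  - exact: (hinc o0 o1).
  - exact: (hinc o1 o2).
case=> a [b [c [hab hbc hc hca hab']]].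
have ha : a < n by lia.
have hb : b < n by lia.
exists (fun k : 'I_3 => inord (nth 0 [:: a; b; c] k)); split.
  move=> [[|[|[|x]]] hx] [[|[|[|y]]] hy] //= _; rewrite !inordK //; lia.
rewrite /f in hca hab'.
move=> [[|[|[|x]]] hx] [[|[|[|y]]] hy] //=; rewrite ?ltnn //; first [lia | apply/idP/idP => H; lia | apply/negP => H; lia].
Qed.

Section Dir1.
Hypothesis nT : ~ T231.

Lemma row_exists i j : i < n -> j < n -> j < f i -> i < g j -> exists j0, ess i j0.
Proof.
move=> hi hj h1 h2.
have hin : i.+1 < n by have := g_lt j; lia.
case: (ltnP (f i) (f i.+1)) => h.
  exfalso; apply: nT; exists i, i.+1, (g j); split => //; rewrite ?fg //.
  - have E := fg hj.
    case: (ltnP i.+1 (g j)) => // h3; have E2 : g j = i.+1 by lia.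
    by rewrite E2 in E; lia.
  - exact: g_lt.
have hne : f i.+1 != f i by apply/eqP => /f_inj E; have := E hin hi; lia.
have hx : i < g (f i.+1) by rewrite gf.
have hy : ~~ (i < g (f i)) by rewrite gf // ltnn.
have [j0 [h3 h4 h5 h6]] := @cross (fun v => i < g v) (f i.+1) (f i) h hx hy.
exists j0; split => //; lia.
Qed.

Lemma row_uniq i j1 j2 : ess i j1 -> ess i j2 -> j1 < j2 -> False.
Proof.
case=> hin hf1 h11 h12 h13 [_ hf2 h21 h22 h23] hlt.
have hj : j1.+1 < n by have := f_lt i; lia.
have E := fg hj.
apply: nT; exists (g j1.+1), i, i.+1; split => //; rewrite ?E //; try lia.
case: (ltnP (g j1.+1) i) => // h; have E2 : g j1.+1 = i by lia.
by rewrite E2 in E; lia.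
Qed.

Lemma col_uniq j i1 i2 : ess i1 j -> ess i2 j -> i1 < i2 -> False.
Proof.
case=> hin hf1 h11 h12 h13 [hin2 hf2 h21 h22 h23] hlt.
have hj : j.+1 < n by have := f_lt i1; lia.
have hj0 : j < n by lia.
have E := fg hj; have E0 := fg hj0.
apply: nT; exists (g j.+1), i2, (g j); split; rewrite ?E ?E0 //; try lia.
  exact: g_lt.
case: (ltnP j.+1 (f i2)) => // h; have E2 : f i2 = j.+1 by lia.
have := gf (ltnW hin2); rewrite E2; lia.
Qed.
End Dir1.

Section Dir2.
Hypothesis H1 : forall i j, i < n -> j < n -> j < f i -> i < g j -> exists j0, ess i j0.
Hypothesis H2 : forall j i1 i2, ess i1 j -> ess i2 j -> i1 < i2 -> False.

Lemma no231 k a b c : b - a <= k -> a < b -> b < c -> c < n -> f c < f a -> f a < f b -> False.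
Proof.
elim: k a => [|k IH] a hk hab hbc hc hca hab'; first by lia.
have ha : a < n by lia.
have hb : b < n by lia.
case: (boolP [exists r : 'I_n, (a < r < b) && (f r <= f c)]).
  case/existsP => [[r hr]] /= /andP [/andP [har hrb] hrc].
  have hrc' : f r < f c.
    case: (ltnP (f r) (f c)) => // h; have E : f r = f c by lia.
    have := f_inj hr hc E; lia.
  have hx : r < g (f c) by rewrite gf //; lia.
  have hy : ~~ (r < g (f a)) by rewrite gf // -leqNgt; lia.
  have [j [hj1 hj2 hj3 hj4]] := @cross (fun v => r < g v) (f c) (f a) (ltnW hca) hx hy.
  rewrite -leqNgt in hj4.
  have hjn : j.+1 < n by have := f_lt a; lia.
  have Ej := fg (ltnW hjn); have Ej1 := fg hjn.
  case: (ltnP b (g j)) => hbg.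
    have hx1 : j < f (g j.+1) by rewrite Ej1.
    have hy1 : ~~ (j < f r) by rewrite -leqNgt; lia.
    have [i1 [hi1 hi2 hi3 hi4]] := @cross (fun k => j < f k) (g j.+1) r hj4 hx1 hy1.
    have hx2 : j < f b by lia.
    have hy2 : ~~ (j < f (g j)) by rewrite Ej ltnn.
    have [i2 [hi5 hi6 hi7 hi8]] := @cross (fun k => j < f k) b (g j) (ltnW hbg) hx2 hy2.
    rewrite -leqNgt in hi4; rewrite -leqNgt in hi8.
    have gjn := g_lt j.
    apply: (H2 (j := j) (i1 := i1) (i2 := i2)); [split|split|]; lia.
  have hgb : g j < b.
    case: (ltnP (g j) b) => // h; have E : g j = b by lia.
    by rewrite E in Ej; lia.
  apply: (IH (g j) _ hgb hbc hc); rewrite ?Ej; try lia.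
  case: (ltnP (f c) j) => // h; have E : f c = j by lia.
  by rewrite -E gf in hgb; lia.
move/existsPn => hno.
have hy : ~~ (f b <= f a) by rewrite -ltnNge.
have [i [hi1 hi2 hi3 hi4]] := @cross (fun v => f v <= f a) a b (ltnW hab) (leqnn _) hy.
rewrite -ltnNge in hi4.
have hin : i < n by lia.
have hfi : f c < f i.
  case: (ltnP a i) => h.
    have := hno (Ordinal hin) => /=; rewrite h hi2 /= -ltnNge; exact.
  have E : i = a by lia.
  by rewrite E.
have hgc : i < g (f c) by rewrite gf //; lia.
have [j0 [_ h1 h2 _ _]] := H1 hin (f_lt c) hfi hgc.
lia.
Qed.
End Dir2.
End S.

Theorem proposition3p11 (n : nat) (pi : 'S_n) :
  schroeder pi ->
  (avoids pi [:: 2; 3; 1] <->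
   ((forall i : 'I_n, diagram_row pi i ->
       #|[set j : 'I_n | in_essential pi i j]| = 1) /\
    (forall j : 'I_n, diagram_col pi j ->
       #|[set i : 'I_n | in_essential pi i j]| <= 1))).
Proof.
move=> _; case: n pi => [|m] pi.
  split=> [_|_].
    by split => -[].
  by case=> F _; case: (F ord0).
rewrite /avoids pat231; split.
  move=> nT; split.
    move=> i /existsP [j]; rewrite diagE => /and4P [hi hj h1 h2].
    have [j0 h0] := row_exists nT hi hj h1 h2.
    have hj0 : j0 < m.+1 by case: h0 => _ _ h _ _; have := f_lt pi i; lia.
    rewrite (_ : [set j : 'I_m.+1 | in_essential pi i j] = [set Ordinal hj0]) ?cards1 //.
    apply/setP => k; rewrite !inE; apply/idP/eqP.
      move/essE => hk; apply/val_inj => /=.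
      case: (ltngtP k j0) => // h.
        by case: (row_uniq nT hk h0 h).
      by case: (row_uniq nT h0 hk h).
    by move=> ->; apply/essE.
  move=> j _; apply/card_le1_eqP => x y; rewrite !inE => /essE hx /essE hy.
  apply/val_inj; case: (ltngtP x y) => // h.
    by case: (col_uniq nT hx hy h).
  by case: (col_uniq nT hy hx h).
case=> Hi Hii [a [b [c [hab hbc hc hca hab']]]].
apply: (@no231 m pi _ _ (b - a) a b c) => //.
  move=> i j hi hj h1 h2.
  have hd : diagram_row pi (Ordinal hi).
    by apply/existsP; exists (Ordinal hj); rewrite diagE /= hi hj h1 h2.
  have := Hi _ hd => hc1.
  have : 0 < #|[set j : 'I_m.+1 | in_essential pi (Ordinal hi) j]| by rewrite hc1.
  by case/card_gt0P => x; rewrite inE => /essE hx; exists x.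
move=> j i1 i2 e1 e2 hlt.
have hi1 : i1 < m.+1 by case: e1; lia.
have hi2 : i2 < m.+1 by case: e2; lia.
have hj : j < m.+1 by case: e1 => _ _ h _ _; have := f_lt pi i1; lia.
have hd : diagram_col pi (Ordinal hj).
  apply/existsP; exists (Ordinal hi1); move/essE: e1 => /=.
  by case/and3P.
have := Hii _ hd => /card_le1_eqP H.
have := H (Ordinal hi1) (Ordinal hi2).
rewrite !inE /=.
move=> /(_ (proj2 (essE _ _ _) e1) (proj2 (essE _ _ _) e2)) [E].
lia.
Qed.
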